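(* Let $G$ be a graph with $n$ vertices. Then for every integer $m\geq 1$, $$P_{DP}(G,m)\leq \frac{m^{n}(m-1)^{|E(G)|}}{m^{|E(G)|}}.$$
   Context: All graphs are finite and simple. A cover of a graph $G$ is a pair $\mathcal{H}=(L,H)$ where $H$ is a graph and $L:V(G)\to\mathcal{P}(V(H))$ satisfies: (1) the sets $L(u)$, $u\in V(G)$, partition $V(H)$; (2) for every $u$, $H[L(u)]$ is complete; (3) if $E_H(L(u),L(v))\neq\emptyset$ then $u=v$ or $uv\in E(G)$; (4) if $uv\in E(G)$ then $E_H(L(u),L(v))$ is a matching (possibly empty). Here $E_H(S,U)$ is the set of edges of $H$ between $S$ and $U$. The cover is $m$-fold if $|L(u)|=m$ for all $u$. An $\mathcal{H}$-coloring is an independent set of $H$ of size $|V(G)|$. $P_{DP}(G,\mathcal{H})$ is the number of $\mathcal{H}$-colorings, and $P_{DP}(G,m)$ is the minimum of $P_{DP}(G,\mathcal{H})$ over all $m$-fold covers $\mathcal{H}$ of $G$. *)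

(* Defs.v *)
From HB Require Import structures.
From mathcomp Require Import all_boot all_order all_algebra.
Set Implicit Arguments. Unset Strict Implicit. Unset Printing Implicit Defensive.

Definition simple_graph (V : finType) (e : rel V) : Prop :=
  symmetric e /\ irreflexive e.

Definition num_edges (V : finType) (e : rel V) : nat :=
  #|[set A : {set V} | [exists x, exists y, e x y && (A == [set x; y])]]|.

(* Every m-fold cover of G has
   exactly |V(G)|*m vertices, so (up to isomorphism, which preserves the number
   of H-colorings) we may take V(H) = V * 'I_m.  H itself is an arbitrary
   graph on this vertex set, given by its set of (ordered) adjacent pairs hE,
   and L : V -> {set V(H)} is an arbitrary assignment. *)
Definition HV (V : finType) (m : nat) : finType := (V * 'I_m)%type.

Definition is_cover (V : finType) (e : rel V) (m : nat)
  (L : {ffun V -> {set HV V m}}) (hE : {set HV V m * HV V m}) : bool :=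
  [&&
      [forall x, forall y, ((x, y) \in hE) == ((y, x) \in hE)],
      [forall x, (x, x) \notin hE],
      [forall x, #|[set u | x \in L u]| == 1],
      [forall u, forall x, forall y,
          [&& x \in L u, y \in L u & x != y] ==> ((x, y) \in hE)],
      [forall u, forall v, forall x, forall y,
          [&& x \in L u, y \in L v & (x, y) \in hE] ==> (u == v) || e u v]
    &
      [forall u, forall v, e u v ==>
         [forall x, (x \in L u) ==> (#|[set y in L v | (x, y) \in hE]| <= 1)] &&
         [forall y, (y \in L v) ==> (#|[set x in L u | (x, y) \in hE]| <= 1)]]].

Definition is_mfold_cover (V : finType) (e : rel V) (m : nat)
  (L : {ffun V -> {set HV V m}}) (hE : {set HV V m * HV V m}) : bool :=
  is_cover e L hE && [forall u, #|L u| == m].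

(* P_DP(G, H): the number of H-colorings, i.e. independent sets of H of size |V(G)|. *)
Definition PDP_cover (V : finType) (m : nat) (hE : {set HV V m * HV V m}) : nat :=
  #|[set I : {set HV V m} |
      [forall x in I, forall y in I, (x, y) \notin hE] && (#|I| == #|V|)]|.

(* The neutral
   element #|{set HV V m}| is an upper bound for every P_DP(G,H), and m-fold
   covers always exist, so this is the genuine minimum. *)
Definition PDP (V : finType) (e : rel V) (m : nat) : nat :=
  \big[minn/#|{set HV V m}|]_(c : {ffun V -> {set HV V m}} * {set HV V m * HV V m}
                               | is_mfold_cover e c.1 c.2) PDP_cover c.2.

(* Main.v *)
Require Import Defs.
From HB Require Import structures.
From mathcomp Require Import all_boot all_order all_algebra.
Import Order.TTheory GRing.Theory Num.Theory.
Set Implicit Arguments. Unset Strict Implicit.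

Section Cov.
Variables (V : finType) (e : rel V) (k : nat).
Hypothesis esym : symmetric e.
Hypothesis eirr : irreflexive e.

Definition rk (u : V) : nat := enum_rank u.

Lemma rk_inj : injective rk.
Proof. by move=> u v /val_inj/enum_rank_inj. Qed.

Definition adj (s : {ffun V * V -> 'I_k.+1}) (x y : V * 'I_k.+1) : bool :=
  ((x.1 == y.1) && (x != y)) ||
  (e x.1 y.1 && (if rk x.1 < rk y.1 then y.2 == (x.2 + s (x.1, y.1))%R
                 else x.2 == (y.2 + s (y.1, x.1))%R)).

Lemma adj_sym s x y : adj s x y = adj s y x.
Proof.
rewrite /adj eq_sym [y == x]eq_sym esym; congr (_ || _).
case E: (e y.1 x.1) => //=.
case: ltngtP => h //.
by move/rk_inj: h E => ->; rewrite eirr.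
Qed.

Lemma adj_irr s x : adj s x x = false.
Proof. by rewrite /adj !eqxx eirr. Qed.

Lemma adj_edge s x y : adj s x y -> (x.1 == y.1) || e x.1 y.1.
Proof. by case/orP=> [/andP[->]|/andP[->]] //; rewrite orbT. Qed.

Lemma adj_match s (x : V * 'I_k.+1) v : e x.1 v ->
  #|[set y : V * 'I_k.+1 | (y.1 == v) && adj s x y]| <= 1.
Proof.
move=> exv.
have xv : x.1 != v by apply: contraTneq exv => ->; rewrite eirr.
pose j := if rk x.1 < rk v then (x.2 + s (x.1, v))%R else (x.2 - s (v, x.1))%R.
rewrite -(cards1 (v, j)) subset_leq_card //; apply/subsetP => -[y1 y2].
rewrite !inE /adj /= => /andP[/eqP ->]; rewrite (negbTE xv) /= => /andP[_].
rewrite /j xpair_eqE eqxx /=; case: ifP => _ /eqP -> //.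
by rewrite addrK.
Qed.

Definition Lc : {ffun V -> {set HV V k.+1}} := [ffun u => [set x : V * 'I_k.+1 | x.1 == u]].
Definition hEs s : {set HV V k.+1 * HV V k.+1} :=
  [set p : (V * 'I_k.+1) * (V * 'I_k.+1) | adj s p.1 p.2].

Lemma cover_ok s : is_mfold_cover e Lc (hEs s).
Proof.
apply/andP; split; last first.
  apply/forallP=> u; rewrite ffunE.
  have -> : [set x : V * 'I_k.+1 | x.1 == u] = [set (u, i) | i : 'I_k.+1].
    apply/setP=> [[a i]]; rewrite !inE /=; apply/eqP/imsetP => [->|[j _ [-> _]]] //.
    by exists i.
  by rewrite card_imset ?card_ord // => i j [].
rewrite /is_cover; do !(apply/andP; split).
- by apply/forallP=> x; apply/forallP=> y; rewrite !inE /= adj_sym.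
- by apply/forallP=> x; rewrite !inE /= adj_irr.
- apply/forallP=> x; apply/eqP.
  have -> : [set u | x \in Lc u] = [set x.1] by apply/setP=> u; rewrite !inE ffunE inE eq_sym.
  by rewrite cards1.
- apply/forallP=> u; apply/forallP=> x; apply/forallP=> y; apply/implyP.
  rewrite !ffunE !inE => /and3P[/eqP xu /eqP yu xy].
  by rewrite /adj xu yu eqxx xy.
- apply/forallP=> u; apply/forallP=> v; apply/forallP=> x; apply/forallP=> y; apply/implyP.
  rewrite !ffunE !inE => /and3P[/eqP <- /eqP <- /adj_edge] //.
- apply/forallP=> u; apply/forallP=> v; apply/implyP=> euv; apply/andP; split.
  + apply/forallP=> x; apply/implyP; rewrite ffunE inE => /eqP xu.
    apply: leq_trans (@adj_match s x v _) => //; last by rewrite xu.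
    by apply: subset_leq_card; apply/subsetP=> y; rewrite !inE ffunE inE.
  + apply/forallP=> y; apply/implyP; rewrite ffunE inE => /eqP yv.
    apply: leq_trans (@adj_match s y u _) => //; last by rewrite yv esym.
    by apply: subset_leq_card; apply/subsetP=> x; rewrite !inE ffunE inE adj_sym.
Qed.
End Cov.

Section Cnt.
Variables (V : finType) (e : rel V) (k : nat).
Hypothesis esym : symmetric e.
Hypothesis eirr : irreflexive e.

Definition Q (p : V * V) := (rk p.1 < rk p.2) && e p.1 p.2.
Definition good (s : {ffun V * V -> 'I_k.+1}) (c : {ffun V -> 'I_k.+1}) :=
  [forall p : V * V, Q p ==> (c p.2 != c p.1 + s p)%R].

Lemma count_le s : PDP_cover (hEs e s) <= #|[set c | good s c]|.
Proof.
pose f (c : {ffun V -> 'I_k.+1}) : {set HV V k.+1} := [set (u, c u) | u : V].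
apply: leq_trans (leq_imset_card f _); apply: subset_leq_card.
apply/subsetP=> I; rewrite inE => /andP[/forallP indep /eqP cardI].
have nadj x y : x \in I -> y \in I -> adj e s x y = false.
  move=> xI yI; have := indep x; rewrite xI /= => /forallP/(_ y); rewrite yI /=.
  by rewrite /hEs inE /= => /negbTE.
pose c := [ffun u => odflt ord0 [pick i | (u, i) \in I]].
have cE u i : (u, i) \in I -> c u = i.
  move=> uiI; rewrite /c ffunE; case: pickP => [j ujI|/(_ i)]; last by rewrite uiI.
  apply/eqP; apply: contraFT (nadj _ _ uiI ujI) => ij.
  by rewrite /adj /= eqxx /= xpair_eqE eqxx /= eq_sym ij.
have Ifc : I = f c.
  apply/eqP; rewrite eqEcard; apply/andP; split.
    apply/subsetP=> -[u i] uiI; apply/imsetP; exists u => //.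
    by rewrite (cE _ _ uiI).
  by rewrite cardI (leq_trans (leq_imset_card _ _)) // cardE enumT.
apply/imsetP; exists c => //; rewrite inE; apply/forallP=> -[u v]; apply/implyP.
rewrite /Q /= => /andP[ltuv euv].
have Hu w : (w, c w) \in I by rewrite Ifc; apply/imsetP; exists w.
have := nadj (u, c u) (v, c v) (Hu u) (Hu v).
by rewrite /adj /= euv ltuv orbC /= => /norP[].
Qed.
End Cnt.

Lemma foldr_prod (aT : finType) (f : aT -> nat) :
  foldr muln 1 [seq f x | x : aT] = \prod_x f x.
Proof.
have H : forall s : seq nat, foldr muln 1 s = \prod_(i <- s) i.
  elim=> [|a s IH]. by rewrite big_nil. by rewrite big_cons -IH.
rewrite H big_map big_enum. done.
Qed.

Lemma card_sumb (T : finType) (P : pred T) : #|[set x | P x]| = \sum_x (P x : nat).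
Proof. by rewrite -sum1_card big_mkcond; apply: eq_bigr => x _; rewrite inE; case: (P x). Qed.

Section Cnt2.
Variables (V : finType) (e : rel V) (k : nat).

Lemma count_s (c : {ffun V -> 'I_k.+1}) :
  #|[set s | good e s c]| = \prod_(p : V * V) (if Q e p then k else k.+1).
Proof.
pose F (p : V * V) := [pred t : 'I_k.+1 | Q e p ==> (c p.2 != c p.1 + t)%R].
have -> : #|[set s | good e s c]| = #|family F|.
  apply: eq_card => s; rewrite inE /good; apply/forallP/familyP => H p; exact: H.
rewrite card_family foldr_prod; apply: eq_bigr => p _.
rewrite /F; case: (Q e p) => /=; last by exact: card_ord.
have := cardC [pred t : 'I_k.+1 | c p.2 == (c p.1 + t)%R].
have -> : #|[pred t : 'I_k.+1 | c p.2 == (c p.1 + t)%R]| = 1.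
  rewrite -(card1 (c p.2 - c p.1)%R); apply: eq_card => t.
  by rewrite !inE [RHS]eq_sym subr_eq [(t + _)%R]addrC.
have -> : #|fintype_ordinal__canonical__fintype_Finite k.+1| = k.+1 by exact: card_ord.
move=> H; apply: (@addnI 1); rewrite [1 + k]add1n -[in RHS]H; congr (_ + _).

Qed.
End Cnt2.

Lemma num_edges_Q (V : finType) (e : rel V) : symmetric e -> irreflexive e ->
  #|[pred p : V * V | Q e p]| = num_edges e.
Proof.
move=> esy eirr.
pose g (p : V * V) := [set p.1; p.2].
have -> : num_edges e = #|g @: [set p | Q e p]|.
  rewrite /num_edges; apply: eq_card => A; rewrite inE.
  apply/existsP/imsetP => [[x /existsP[y /andP[exy /eqP ->]]]|[[x y]]].
    case: (ltngtP (rk x) (rk y)) => h.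
    - by exists (x, y) => //; rewrite inE /Q /= h exy.
    - by exists (y, x); [rewrite inE /Q /= h esy | rewrite /g /= setUC].
    - by move/rk_inj: h exy => ->; rewrite eirr.
  rewrite inE /Q /= => /andP[_ exy] ->; exists x; apply/existsP; exists y.
  by rewrite exy eqxx.
rewrite card_in_imset; first by apply: eq_card => p; rewrite inE.
move=> [a b] [c d]; rewrite !inE /Q /= => /andP[ab _] /andP[cd _] /setP E.
have := E a; have := E b; have := E c; rewrite !inE !eqxx /= ?orbT.
move=> H1 /esym H2 /esym H3.
case/orP: H1 => /eqP ?; case/orP: H2 => /eqP ?; case/orP: H3 => /eqP ?; subst => //.
all: try (by rewrite ltnn in ab); try (by rewrite ltnn in cd).
all: by have := ltn_trans ab cd; rewrite ltnn.
Qed.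

Lemma bigminn_le (I : finType) (P : pred I) (F : I -> nat) x i0 :
  P i0 -> \big[minn/x]_(i | P i) F i <= F i0.
Proof.
move=> Pi0; rewrite -big_filter.
have : i0 \in [seq i <- index_enum I | P i] by rewrite mem_filter Pi0 mem_index_enum.
elim: [seq i <- index_enum I | P i] => //= a r IH.
rewrite in_cons big_cons; case/orP => [/eqP<-|H]; first by rewrite geq_minl.
by rewrite geq_min IH ?orbT.
Qed.

Unset Implicit Arguments.
Theorem mainTheorem8 (V : finType) (e : rel V) (m : nat) :
  simple_graph e -> (1 <= m)%N ->
  (((PDP e m)%:R : rat) <=
    (m ^ #|V| * (m - 1) ^ num_edges e)%:R / (m ^ num_edges e)%:R)%R.
Proof.
move=> [esy eirr]; case: m => [//|k] _.
rewrite subn1 /=.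
rewrite ler_pdivlMr ?ltr0n ?expn_gt0 // -natrM ler_nat.
rewrite -(num_edges_Q esy eirr).
set K := #|[pred p : V * V | Q e p]|.
set K' := #|[pred p : V * V | ~~ Q e p]|.
have hP (s : {ffun V * V -> 'I_k.+1}) : PDP e k.+1 <= #|[set c | good e s c]|.
  apply: leq_trans (count_le e s).
  have := @bigminn_le _ (fun c : {ffun V -> {set HV V k.+1}} * {set HV V k.+1 * HV V k.+1} => is_mfold_cover e c.1 c.2) (fun c => PDP_cover c.2) #|{set HV V k.+1}| (Lc V k, hEs e s) (cover_ok esy eirr s). exact.
have prodE (c : {ffun V -> 'I_k.+1}) : #|[set s | good e s c]| = k ^ K * k.+1 ^ K'.
  rewrite count_s (bigID (Q e)) /=.
  rewrite (eq_bigr (fun _ => k)); last by move=> p ->.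
  rewrite [X in _ * X](eq_bigr (fun _ => k.+1)); last by move=> p /negbTE ->.
  by rewrite !prod_nat_const.
have sumE : \sum_(s : {ffun V * V -> 'I_k.+1}) #|[set c | good e s c]| =
            k.+1 ^ #|V| * (k ^ K * k.+1 ^ K').
  rewrite (eq_bigr _ (fun (s : {ffun V * V -> 'I_k.+1}) _ => card_sumb (good e s))) exchange_big /=.
  rewrite (eq_bigr (fun _ => k ^ K * k.+1 ^ K')); last first.
    by move=> c _; rewrite -(prodE c) (@card_sumb _ (fun s => good e s c)).
  by rewrite sum_nat_const card_ffun card_ord.
have : \sum_(s : {ffun V * V -> 'I_k.+1}) PDP e k.+1 <= \sum_(s : {ffun V * V -> 'I_k.+1}) #|[set c | good e s c]| by apply: leq_sum => s _; exact: hP.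
rewrite sumE sum_nat_const card_ffun card_ord.
have -> : #|{: V * V}| = K + K' by rewrite -(cardC (Q e)).
rewrite expnD mulnA [_ * PDP e _]mulnC -mulnA mulnA [k ^ K * _]mulnC mulnA.
by rewrite [X in _ <= X]mulnAC leq_pmul2r ?expn_gt0.
Qed.
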